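(* For every $i\in\{1,\ldots,s\}$ and every non-negative integer $r$, $$\boldsymbol{\beta}_G\circ\gamma_i^r=\gamma_i^{r+1}\circ\beta_{G_i}.$$
   Context: Let $G$ be a finite group, $p$ a prime dividing $|G|$, and $\mathbb{F}_p$ the field with $p$ elements. $G$ acts on $\mathbb{F}_pG$ and on $\mathbb{Z}/p^2[G]$ by conjugation. Let $\boldsymbol{\beta}_G:\mathrm{H}^r(G,\mathbb{F}_pG)\to\mathrm{H}^{r+1}(G,\mathbb{F}_pG)$ be the connecting homomorphism of the short exact sequence of $\mathbb{Z}G$-modules $0\to\mathbb{F}_pG\to\mathbb{Z}/p^2[G]\to\mathbb{F}_pG\to0$, where the first map sends $\widehat a g\mapsto\overline{pa}g$ and the second is reduction mod $p$ of the coefficients. For a subgroup $H$, $\beta_H:\mathrm{H}^r(H,\mathbb{F}_p)\to\mathrm{H}^{r+1}(H,\mathbb{F}_p)$ is the usual Bockstein homomorphism of group cohomology (connecting map of $0\to\mathbb{F}_p\to\mathbb{Z}/p^2\to\mathbb{F}_p\to0$). Let $g_1=1,g_2,\ldots,g_s$ be representatives of the conjugacy classes of $G$ and $G_i=C_G(g_i)$. Let $\theta_{g_i}:\mathbb{F}_p\to\mathbb{F}_pG$, $\lambda\mapsto\lambda g_i$ (a $\mathbb{F}_pG_i$-module map), and $\gamma_i:=\mathrm{tr}_{G_i}^G\circ\theta_{g_i}^*:\mathrm{H}^*(G_i,\mathbb{F}_p)\to\mathrm{H}^*(G,\mathbb{F}_pG)$; $\gamma_i^r$ denotes its component in degree $r$.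 *)

(* Defs.v *)
From HB Require Import structures.
From mathcomp Require Import all_boot all_order all_algebra all_fingroup.
Set Implicit Arguments. Unset Strict Implicit. Unset Printing Implicit Defensive.
Import GRing.Theory.
Local Open Scope ring_scope.
Local Open Scope group_scope.

(* A cochain with n arguments (degree n-1) on gT with values in M: a function
   on (n)-tuples of group elements.  Homogeneous convention:
   C^r(H,M) = Hom_H(Z[H^{r+1}], M), H acting diagonally on the left. *)

Definition on_set (gT : finGroupType) (H : {set gT}) (n : nat) (x : 'I_n -> gT) :=
  forall k, x k \in H.

Definition equivariant (gT : finGroupType) (M : Type) (H : {set gT})
  (act : gT -> M -> M) (n : nat) (f : ('I_n -> gT) -> M) :=
  forall (h : gT) (x : 'I_n -> gT), h \in H -> on_set H x ->
    f (fun k => (h * x k)%g) = act h (f x).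

Definition cobound (gT : finGroupType) (M : zmodType) (n : nat)
  (f : ('I_n -> gT) -> M) : ('I_n.+1 -> gT) -> M :=
  fun x => (\sum_(j < n.+1)
             (if odd j then - f (fun k => x (lift j k)) else f (fun k => x (lift j k))))%R.

Definition is_cocycle (gT : finGroupType) (M : zmodType) (H : {set gT})
  (n : nat) (f : ('I_n -> gT) -> M) :=
  forall x : 'I_n.+1 -> gT, on_set H x -> cobound f x = 0%R.

Definition is_coboundary (gT : finGroupType) (M : zmodType) (H : {set gT})
  (act : gT -> M -> M) (n : nat) (f : ('I_n.+2 -> gT) -> M) :=
  exists e : ('I_n.+1 -> gT) -> M,
    equivariant H act e /\ forall x, on_set H x -> f x = cobound e x.

Definition triv_act (gT : finGroupType) (M : Type) : gT -> M -> M := fun _ m => m.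

(* conjugation action on R[G] = {ffun gT -> R}, a = sum_y a(y) y:
   g . a = sum_y a(y) g y g^-1, whose coefficient at z is a(g^-1 z g) = a(z ^ g). *)
Definition conj_act (gT : finGroupType) (R : Type) (g : gT) (a : {ffun gT -> R})
  : {ffun gT -> R} := [ffun z => a (z ^ g)].

(* set-theoretic lift F_p -> Z/p^2 (representative in {0,..,p-1}) and
   the inverse of the injection Z/p^2 >-> ... i.e. (p a mod p^2) |-> a mod p *)
Definition liftp (p : nat) (a : 'F_p) : 'Z_(p ^ 2) := ((nat_of_ord a)%:R)%R.
Definition unp (p : nat) (v : 'Z_(p ^ 2)) : 'F_p := (((nat_of_ord v) %/ p)%N%:R)%R.

(* Bockstein beta_H on cochains with trivial F_p coefficients:
   connecting map of 0 -> F_p -> Z/p^2 -> F_p -> 0 (lift, cobound, divide by p). *)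
Definition bock_triv (gT : finGroupType) (p : nat) (n : nat)
  (c : ('I_n -> gT) -> 'F_p) : ('I_n.+1 -> gT) -> 'F_p :=
  fun x => unp (cobound (fun y => liftp (c y)) x).

(* boldface Bockstein beta_G on cochains with coefficients F_pG:
   connecting map of 0 -> F_pG -> Z/p^2[G] -> F_pG -> 0, coefficientwise. *)
Definition bock_grp (gT : finGroupType) (p : nat) (n : nat)
  (c : ('I_n -> gT) -> {ffun gT -> 'F_p}) : ('I_n.+1 -> gT) -> {ffun gT -> 'F_p} :=
  fun x => [ffun z => unp (cobound (fun y => [ffun w => liftp (c y w)]) x z)].

Definition theta (gT : finGroupType) (p : nat) (g : gT) (l : 'F_p) : {ffun gT -> 'F_p} :=
  [ffun z => if z == g then l else 0%R].

(* Transfer (corestriction) tr_H^G, G = [set: gT], on cochains: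
   an H-cochain f (on H^n) is first transported to G^n along the chain map
   x |-> x rho(x)^-1 (rho = chosen right-coset representative, so x rho(x)^-1 \in H),
   then tr f (x) = sum_{Ht in H\G} t^-1 . f(t x). *)
Definition transfer (gT : finGroupType) (M : zmodType) (H : {group gT})
  (act : gT -> M -> M) (n : nat) (f : ('I_n -> gT) -> M) : ('I_n -> gT) -> M :=
  fun x => (\sum_(C in rcosets H [set: gT])
     act ((repr C)^-1)%g
       (f (fun k => ((repr C * x k) * (repr (H :* (repr C * x k)))^-1)%g)))%R.

Definition gamma (gT : finGroupType) (p : nat) (g : gT) (n : nat)
  (c : ('I_n -> gT) -> 'F_p) : ('I_n -> gT) -> {ffun gT -> 'F_p} :=
  transfer 'C[g]%G (@conj_act gT 'F_p) (fun x => theta g (c x)).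

(* Main.v *)
Require Import Defs.
From HB Require Import structures.
From mathcomp Require Import all_boot all_order all_algebra all_fingroup.
Import GRing.Theory.
Set Implicit Arguments. Unset Strict Implicit.

Section Aux.
Variable gT : finGroupType.

Lemma cobound_ffun (M : zmodType) n (F : ('I_n -> gT) -> {ffun gT -> M}) x z :
  cobound F x z = cobound (fun y => F y z) x.
Proof.
rewrite /cobound sum_ffunE; apply: eq_bigr => j _.
by case: (odd j); rewrite ?ffunE.
Qed.

Lemma cobound0 (M : zmodType) n (x : 'I_n.+1 -> gT) :
  cobound (fun _ : 'I_n -> gT => (0 : M)%R) x = 0%R.
Proof. by rewrite /cobound big1 // => j _; case: (odd j); rewrite ?oppr0. Qed.

Definition phi (H : {group gT}) (C : {set gT}) n (y : 'I_n -> gT) : 'I_n -> gT :=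
  fun k => ((repr C * y k) * (repr (H :* (repr C * y k)))^-1)%g.

Lemma uniq_coset (g z : gT) (C C0 : {set gT}) :
  C \in rcosets 'C[g] [set: gT] -> C0 \in rcosets 'C[g] [set: gT] ->
  (z ^ (repr C)^-1 == g)%g -> (z ^ (repr C0)^-1 == g)%g -> C = C0.
Proof.
move=> /rcosetsP[x _ ->] /rcosetsP[x0 _ ->].
set t := repr _; set t0 := repr _ => /eqP e /eqP e0.
rewrite -(rcoset_repr _ x) -(rcoset_repr _ x0) -/t -/t0.
apply/rcoset_eqP; rewrite mem_rcoset cent1E.
have h1 : (z = g ^ t)%g by rewrite -e conjgKV.
have h2 : (z = g ^ t0)%g by rewrite -e0 conjgKV.
have h3 : (g ^ (t * t0^-1) = g)%g by rewrite conjgM -h1 h2 conjgK.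
apply/eqP; move: h3; set u := (t * t0^-1)%g; rewrite /conjg => h3.
by rewrite -{1}h3 mulKVg.
Qed.

Lemma gamma_sel (p : nat) (g z : gT) :
  (exists C0 : {set gT}, forall n (d : ('I_n -> gT) -> 'F_p) y,
     gamma g d y z = d (phi 'C[g]%G C0 y)) \/
  (forall n (d : ('I_n -> gT) -> 'F_p) y, gamma g d y z = 0%R).
Proof.
case: (pickP (fun C => (C \in rcosets 'C[g] [set: gT]) && (z ^ (repr C)^-1 == g)%g)).
  move=> C0 /andP[HC0 E0]; left; exists C0 => n d y.
  rewrite /gamma /transfer sum_ffunE (bigD1 C0) //= big1 ?addr0.
    by rewrite !ffunE E0.
  move=> C /andP[HC nC]; rewrite !ffunE; case: ifP => // E.
  by rewrite (uniq_coset HC HC0 E E0) eqxx in nC.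
move=> none; right => n d y.
rewrite /gamma /transfer sum_ffunE big1 // => C HC.
by rewrite !ffunE; have := none C; rewrite HC /= => ->.
Qed.

End Aux.

Theorem lemma2p3 (gT : finGroupType) (p : nat) (g : gT) (r : nat)
  (hp : prime p) (hpG : p %| #|[set: gT]|)
  (c : ('I_r.+1 -> gT) -> 'F_p)
  (hceq : equivariant 'C[g]%g (@triv_act gT 'F_p) c)
  (hcoc : is_cocycle 'C[g]%g c) :
  is_coboundary [set: gT] (@conj_act gT 'F_p)
    (fun x => (bock_grp (gamma g c) x - gamma g (bock_triv c) x)%R).
Proof.
exists (fun _ => 0%R); split.
  by move=> h x _ _; apply/ffunP => w; rewrite !ffunE.
move=> x _; rewrite cobound0; apply/eqP; rewrite subr_eq0; apply/eqP.
apply/ffunP => z; rewrite ffunE cobound_ffun.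
case: (gamma_sel p g z) => [[C0 E]|E].
  rewrite E; rewrite /bock_triv; congr unp.
  rewrite /cobound; apply: eq_bigr => j _.
  by rewrite !ffunE !E.
rewrite E.
transitivity (unp (cobound (fun _ : 'I_r.+1 -> gT => (0 : 'Z_(p ^ 2))%R) x)).
  congr unp; rewrite /cobound; apply: eq_bigr => j _.
  by rewrite !ffunE !E.
by rewrite cobound0 /unp div0n.
Qed.
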